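(* For every $n\equiv 1$ or $3 \pmod 4$ with $n\ge 7$, there exists a Heffter array $H(n;6)$ (indeed one in which every row and column sums, as integers, to $12n+1$).
   Context: A Heffter array $H(n;k)$ is an $n\times n$ array in which some cells are filled with nonzero integers and the others are empty, such that: each row and each column contains exactly $k$ filled cells; the entries of every row and of every column sum to $0$ modulo $2nk+1$; and for each integer $1\le x\le nk$, exactly one of $x$ or $-x$ appears in the array, and it appears exactly once. *)

(* Defs.v *)
From HB Require Import structures.
From mathcomp Require Import all_boot all_order all_algebra.
Set Implicit Arguments. Unset Strict Implicit. Unset Printing Implicit Defensive.
Import Order.TTheory GRing.Theory Num.Theory.

(* An n x n partially filled array: None = empty cell, Some z = cell filled with z. *)
Definition parray (n : nat) := 'I_n -> 'I_n -> option int.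

Definition cval (c : option int) : int := odflt 0%R c.

Definition filled (c : option int) : bool := if c is Some _ then true else false.

Definition row_sum n (A : parray n) (i : 'I_n) : int := (\sum_(j < n) cval (A i j))%R.
Definition col_sum n (A : parray n) (j : 'I_n) : int := (\sum_(i < n) cval (A i j))%R.

Definition heffter (n k : nat) (A : parray n) : Prop :=
  (forall i j z, A i j = Some z -> z != 0%R) /\
  (forall i : 'I_n, #|[set j : 'I_n | filled (A i j)]| = k) /\
  (forall j : 'I_n, #|[set i : 'I_n | filled (A i j)]| = k) /\
  (forall i : 'I_n, (row_sum A i %% Posz (2 * n * k + 1))%Z = 0%R) /\
  (forall j : 'I_n, (col_sum A j %% Posz (2 * n * k + 1))%Z = 0%R) /\
  (forall x : nat, 1 <= x <= n * k ->
     #|[set p : 'I_n * 'I_n |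
        (A p.1 p.2 == Some (Posz x)) || (A p.1 p.2 == Some (- Posz x)%R)]| = 1).

(* Main.v *)
Require Import Defs.
From HB Require Import structures.
From mathcomp Require Import all_boot all_order all_algebra.
From mathcomp Require Import zify.
Import GRing.Theory.

Definition md (n x : nat) : nat := if x < n then x else x - n.
Arguments md : simpl never.

Lemma md_eq n x : x < n + n -> (x < n /\ md n x = x) \/ (n <= x /\ md n x = x - n).
Proof. rewrite /md; case: (ltnP x n) => H1 H2; [left|right]; split => //; lia. Qed.

Lemma mod_md n x : x < n + n -> x %% n = md n x.
Proof.
rewrite /md; case: (ltnP x n) => H1 H2; first by rewrite modn_small.
rewrite -{1}(subnK H1) modnDr modn_small //; lia.
Qed.

Lemma mdmd n a b : a + b < n + n -> md n (md n a + b) = md n (a + b).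
Proof. rewrite /md => H; case: (ltnP a n) => H1; case: (ltnP (a + b) n) => H2;
  do ?[case: ifP => ?]; lia. Qed.

Ltac md_elim :=
  repeat match goal with
  | |- context[md ?n (md ?n ?a + ?b)] =>
    lazymatch a with context[md _ _] => fail | _ => idtac end;
    lazymatch a with context[_ %% _] => fail | _ => idtac end;
    let H := fresh "H" in
    (have H : a + b < n + n by lia);
    rewrite (mdmd n a b H); clear H
  | |- context[?x %% ?n] =>
    lazymatch x with context[_ %% _] => fail | _ => idtac end;
    let H := fresh "H" in
    (have H : x < n + n by lia);
    rewrite (mod_md n x H); clear H
  | |- context[md ?n ?x] =>
    lazymatch x with context[md _ _] => fail | _ => idtac end;
    let H := fresh "H" in
    (have H : x < n + n by lia);
    let y := fresh "y" in
    move: (md_eq n x H); move: (md n x) => y; clear H; case => [[? ?]|[? ?]]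
  end.

Definition cv n (t i : nat) : option int :=
  match t with
  | 0 => Some (Posz (n + 1 + i))
  | 1 => Some (Posz (6 * n - i))
  | 2 => Some (Posz (3 * n + 1 + md n (i + 1)))
  | 3 => Some (- Posz (2 * n + 1 + md n (i + 3)))%R
  | 4 => Some (- Posz (1 + md n (i + 1)))%R
  | 5 => None
  | 6 => Some (Posz (4 * n + 1 + md n (i + 3)))
  | _ => None
  end.

Definition av n (t i : nat) : nat :=
  match t with
  | 0 => n + 1 + i
  | 1 => 6 * n - i
  | 2 => 3 * n + 1 + md n (i + 1)
  | 3 => 2 * n + 1 + md n (i + 3)
  | 4 => 1 + md n (i + 1)
  | 5 => 0
  | 6 => 4 * n + 1 + md n (i + 3)
  | _ => 0
  end.

Definition inD (t : nat) : bool := (t < 7) && (t != 5).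

Definition Arr n : parray n := fun i j => cv n (md n (j + n - i)) i.

Definition hit n t i x := (cv n t i == Some (Posz x)) || (cv n t i == Some (- Posz x)%R).

Lemma hit_av n t i x : 0 < x -> hit n t i x -> inD t /\ av n t i = x.
Proof.
move=> x0; rewrite /hit.
case: t => [|[|[|[|[|[|[|t]]]]]]]; rewrite /= ?orbF //;
  (move=> /orP[/eqP [H]|/eqP [H]] || move=> /eqP [H]); split => //; lia.
Qed.

Lemma av_inj n t t' i i' : 7 <= n -> i < n -> i' < n -> inD t -> inD t' ->
  av n t i = av n t' i' -> t = t' /\ i = i'.
Proof.
move=> Hn Hi Hi'.
case: t => [|[|[|[|[|[|[|t]]]]]]] => //; case: t' => [|[|[|[|[|[|[|t']]]]]]] => //= _ _;
  md_elim; split; lia.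
Qed.

Lemma big_narrow (R : Type) (idx : R) (op : Monoid.com_law idx) n (G : nat -> R) :
  7 <= n -> (forall t, 7 <= t -> G t = idx) ->
  \big[op/idx]_(t < n) G t = \big[op/idx]_(t < 7) G t.
Proof.
move=> Hn HG.
rewrite -(big_mkord xpredT G) -(big_mkord xpredT G) (big_cat_nat (leq0n 7) Hn) /=.
rewrite [X in op _ X]big1_seq ?Monoid.mulm1 // => t /andP[_]; rewrite mem_index_iota => /andP[Ht _]; exact: HG.
Qed.

Lemma cv_big n t i : 7 <= t -> cv n t i = None.
Proof. by case: t => [|[|[|[|[|[|[|t]]]]]]]. Qed.

Definition rc n (j t : nat) := (j + n - t) %% n.
Arguments rc : simpl never.

Lemma sum7 n (r : nat -> nat) : (\sum_(t < 7) cval (cv n t (r t)) =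
  0 + Posz (n + 1 + r 0%N) + Posz (6 * n - r 1%N) + Posz (3 * n + 1 + md n (r 2%N + 1))
  - Posz (2 * n + 1 + md n (r 3%N + 3)) - Posz (1 + md n (r 4%N + 1)) + 0
  + Posz (4 * n + 1 + md n (r 6%N + 3)))%R.
Proof. by rewrite !big_ord_recr big_ord0 /=. Qed.

Lemma cnt7 n (r : nat -> nat) : \sum_(t < 7) (if filled (cv n t (r t)) then 1 else 0) = 6.
Proof. by rewrite !big_ord_recr big_ord0 /=. Qed.

Definition hr n (n0 : 0 < n) (i : nat) (t : 'I_n) : 'I_n := Ordinal (ltn_pmod (i + t) n0).
Definition hc n (n0 : 0 < n) (j : nat) (t : 'I_n) : 'I_n := Ordinal (ltn_pmod (j + n - t) n0).

Arguments hr {n}.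
Arguments hc {n}.

Lemma ArrR n (n0 : 0 < n) (i t : 'I_n) : Arr n i (hr n0 i t) = cv n t i.
Proof.
rewrite /Arr /=; congr cv; move: (ltn_ord i) (ltn_ord t) => Hi Ht; md_elim; lia.
Qed.

Lemma ArrC n (n0 : 0 < n) (j t : 'I_n) : Arr n (hc n0 j t) j = cv n t (rc n j t).
Proof.
rewrite /Arr /rc /=; congr cv; move: (ltn_ord j) (ltn_ord t) => Hi Ht; md_elim; lia.
Qed.

Lemma hr_inj n (n0 : 0 < n) (i : 'I_n) : injective (hr n0 i).
Proof.
move=> t1 t2 /(congr1 val) /= H; apply: val_inj => /=; move: H.
move: (ltn_ord i) (ltn_ord t1) (ltn_ord t2) => Hi H1 H2; md_elim; lia.
Qed.

Lemma hc_inj n (n0 : 0 < n) (j : 'I_n) : injective (hc n0 j).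
Proof.
move=> t1 t2 /(congr1 val) /= H; apply: val_inj => /=; move: H.
move: (ltn_ord j) (ltn_ord t1) (ltn_ord t2) => Hi H1 H2; md_elim; lia.
Qed.

Arguments ArrR {n}.
Arguments ArrC {n}.
Arguments hr_inj {n}.
Arguments hc_inj {n}.

Lemma cnt_row n (n0 : 0 < n) (Hn : 7 <= n) (i : 'I_n) :
  #|[set j : 'I_n | filled (Arr n i j)]| = 6.
Proof.
rewrite -sum1_card big_mkcond /= (reindex_inj (hr_inj n0 i)) /=.
under eq_bigr do rewrite inE ArrR.
rewrite (@big_narrow _ _ _ n (fun t : nat => if filled (cv n t i) then 1 else 0)) //.
  exact: (cnt7 n (fun _ => i)).
by move=> t Ht; rewrite cv_big.
Qed.

Lemma cnt_col n (n0 : 0 < n) (Hn : 7 <= n) (j : 'I_n) :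
  #|[set i : 'I_n | filled (Arr n i j)]| = 6.
Proof.
rewrite -sum1_card big_mkcond /= (reindex_inj (hc_inj n0 j)) /=.
under eq_bigr do rewrite inE ArrC.
rewrite (@big_narrow _ _ _ n (fun t : nat => if filled (cv n t (rc n j t)) then 1 else 0)) //.
  exact: (cnt7 n (rc n j)).
by move=> t Ht; rewrite cv_big.
Qed.

Lemma rs n (n0 : 0 < n) (Hn : 7 <= n) (i : 'I_n) : row_sum (Arr n) i = Posz (12 * n + 1).
Proof.
rewrite /row_sum (reindex_inj (hr_inj n0 i)) /=.
under eq_bigr do rewrite ArrR.
rewrite (@big_narrow _ _ _ n (fun t : nat => cval (cv n t i))) //; last first.
  by move=> t Ht; rewrite cv_big.
rewrite (sum7 n (fun _ => i)).
move: (ltn_ord i) => Hi; md_elim; lia.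
Qed.

Lemma cs n (n0 : 0 < n) (Hn : 7 <= n) (j : 'I_n) : col_sum (Arr n) j = Posz (12 * n + 1).
Proof.
rewrite /col_sum (reindex_inj (hc_inj n0 j)) /=.
under eq_bigr do rewrite ArrC.
rewrite (@big_narrow _ _ _ n (fun t : nat => cval (cv n t (rc n j t)))) //; last first.
  by move=> t Ht; rewrite cv_big.
rewrite sum7 /rc.
move: (ltn_ord j) => Hi.
rewrite !mod_md; try lia.
rewrite !mdmd; try lia.
have -> : j + n - 2 + 1 = j + n - 1 by lia.
have -> : j + n - 3 + 3 = j + n - 0 by lia.
have -> : j + n - 6 + 3 = j + n - 4 + 1 by lia.
md_elim; lia.
Qed.

Lemma hit_ex n x : 7 <= n -> 0 < x -> x <= n * 6 ->
  exists t i, [/\ t < n, i < n & hit n t i x].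
Proof.
move=> Hn x1 x2.
case: (leqP x n) => B0.
  exists 4, (md n (x + n - 2)); split; [lia | md_elim; lia |].
  rewrite /hit; apply/orP; right; apply/eqP; rewrite /=; congr (Some (- Posz _))%R; md_elim; lia.
case: (leqP x (2 * n)) => B1.
  exists 0, (x - n - 1); split; [lia | lia |].
  rewrite /hit; apply/orP; left; apply/eqP; rewrite /=; congr (Some (Posz _)); lia.
case: (leqP x (3 * n)) => B2.
  exists 3, (md n (x - n - 4)); split; [lia | md_elim; lia |].
  rewrite /hit; apply/orP; right; apply/eqP; rewrite /=; congr (Some (- Posz _))%R; md_elim; lia.
case: (leqP x (4 * n)) => B3.
  exists 2, (md n (x - 2 * n - 2)); split; [lia | md_elim; lia |].
  rewrite /hit; apply/orP; left; apply/eqP; rewrite /=; congr (Some (Posz _)); md_elim; lia.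
case: (leqP x (5 * n)) => B4.
  exists 6, (md n (x - 3 * n - 4)); split; [lia | md_elim; lia |].
  rewrite /hit; apply/orP; left; apply/eqP; rewrite /=; congr (Some (Posz _)); md_elim; lia.
exists 1, (6 * n - x); split; [lia | lia |].
rewrite /hit; apply/orP; left; apply/eqP; rewrite /=; congr (Some (Posz _)); lia.
Qed.

Lemma cv_nz n t i z : 0 < n -> i < n -> cv n t i = Some z -> z != 0%R.
Proof.
move=> n0 Hi.
case: t => [|[|[|[|[|[|[|t]]]]]]] //= [<-]; apply/eqP; lia.
Qed.

Lemma once n (n0 : 0 < n) (Hn : 7 <= n) x : 1 <= x <= n * 6 ->
  #|[set p : 'I_n * 'I_n | (Arr n p.1 p.2 == Some (Posz x)) ||
                            (Arr n p.1 p.2 == Some (- Posz x)%R)]| = 1.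
Proof.
move=> /andP[x1 x2].
have [t0 [i0 [Ht0 Hi0 Hh]]] := hit_ex n x Hn x1 x2.
have [D0 A0] := @hit_av n t0 i0 x x1 Hh.
rewrite (_ : [set p | _] = [set (Ordinal Hi0, hr n0 i0 (Ordinal Ht0))]) ?cards1 //.
apply/setP => -[i j]; rewrite !inE /=.
apply/idP/idP.
- move=> H.
  have [D1 A1] := @hit_av n (md n (j + n - i)) i x x1 H.
  have [E1 E2] := @av_inj n _ _ _ _ Hn (ltn_ord i) Hi0 D1 D0 (etrans A1 (esym A0)).
  apply/eqP; congr pair; apply/val_inj => //=.
  move: (ltn_ord i) (ltn_ord j) => Hi Hj; move: E1 E2; md_elim; lia.
- move/eqP => [-> ->].
  move: (ArrR n0 (Ordinal Hi0) (Ordinal Ht0)) => /= ->; exact: Hh.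
Qed.

Theorem lemma3p1 (n : nat) :
  (n %% 4 = 1 \/ n %% 4 = 3) -> 7 <= n ->
  exists A : parray n,
    heffter 6 A /\
    (forall i : 'I_n, row_sum A i = Posz (12 * n + 1)) /\
    (forall j : 'I_n, col_sum A j = Posz (12 * n + 1)).
Proof.
move=> _ Hn.
have n0 : 0 < n by lia.
exists (Arr n).
have RS := rs n n0 Hn; have CS := cs n n0 Hn.
split; last by split.
have E : 2 * n * 6 + 1 = 12 * n + 1 by lia.
split; first by move=> i j z; exact: (@cv_nz n _ i z n0 (ltn_ord i)).
split; first exact: (cnt_row n n0 Hn).
split; first exact: (cnt_col n n0 Hn).
split; first by move=> i; rewrite RS E; exact: modzz.
split; first by move=> j; rewrite CS E; exact: modzz.
move=> x Hx; exact: (once n n0 Hn x Hx).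
Qed.
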